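(* Let $m>0$. There is a constant $C_2>0$ such that for every $\varepsilon\in(0,1]$ and every $\bar x\in\mathbb{R}^4$, $$|\overline{\mathcal{G}}_\varepsilon(\bar x)-\widetilde{\mathcal{G}}_\varepsilon(\bar x)|\le C_2.$$
   Context: For $\varepsilon\in(0,1]$ and $(x,z)\in\mathbb{R}^2\times\mathbb{R}^2$, with $k=(k_1,k_2)$: $$\overline{\mathcal{G}}_\varepsilon(x,z)=\frac1{(2\pi)^4}\int_{\mathbb{R}^4}\frac{\sin^2(\varepsilon k_1/2)\sin^2(\varepsilon k_2/2)}{\varepsilon^4k_1^2k_2^2}\cdot\frac{e^{-i(x\cdot y+k\cdot z)}}{\big(|y|^2+4\varepsilon^{-2}\sin^2(\varepsilon k_1/2)+4\varepsilon^{-2}\sin^2(\varepsilon k_2/2)+m^2\big)^2}\,\mathrm{d}y\,\mathrm{d}k,$$ $$\widetilde{\mathcal{G}}_\varepsilon(x,z)=\frac1{(2\pi)^4}\int_{\mathbb{R}^4}\frac{\sin^2(\varepsilon k_1/2)\sin^2(\varepsilon k_2/2)}{\varepsilon^4k_1^2k_2^2}\cdot\frac{e^{-i(x\cdot y+k\cdot z)}}{(|y|^2+|k|^2+m^2)^2}\,\mathrm{d}y\,\mathrm{d}k.$$ *)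

(* Defs.v *)
From HB Require Import structures.
From mathcomp Require Import all_boot all_order all_algebra.
From mathcomp Require Import all_classical all_reals all_analysis.
Import Order.TTheory GRing.Theory Num.Theory.
Import numFieldNormedType.Exports.
Local Open Scope classical_set_scope.
Local Open Scope ring_scope.

(* Lebesgue measure on R^2 and R^4 = R^2 x R^2 (product measures).
   The library's canonical sigma-finite instance for [\x] is shadowed, so
   we register it for [leb2] explicitly. *)
Section Leb.
Local Open Scope ereal_scope.
Definition leb2 (R : realType) := (@lebesgue_measure R \x @lebesgue_measure R).

HB.instance Definition _ (R : realType) := Measure.on (leb2 R).

Lemma leb2_sigma_finite (R : realType) : sigma_finite setT (leb2 R).
Proof.
rewrite /leb2.
have /sigma_finiteP[F [TF ndF Foo]] := sigma_finiteT (@lebesgue_measure R).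
exists (fun n => F n `*` F n).
  rewrite -setXTT TF predeqE => -[x y]; split.
    move=> [/= [n _ Fnx] [k _ Gky]]; exists (maxn n k) => //; split.
    - by move: x Fnx; exact/subsetPset/ndF/leq_maxl.
    - by move: y Gky; exact/subsetPset/ndF/leq_maxr.
  by move=> [n _ []/= ? ?]; split; exists n.
move=> k; have [? ?] := Foo k.
split; first exact: measurableX.
by rewrite product_measure1E// lte_mul_pinfty// ge0_fin_numE.
Qed.

HB.instance Definition _ (R : realType) :=
  Measure_isSigmaFinite.Build _ _ _ (leb2 R) (@leb2_sigma_finite R).

Definition leb4 (R : realType) := (leb2 R \x leb2 R).
HB.instance Definition _ (R : realType) := Measure.on (leb4 R).
End Leb.

Set Implicit Arguments. Unset Strict Implicit. Unset Printing Implicit Defensive.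

(* Points of R^4 = R^2 x R^2 are written ((y1, y2), (k1, k2)). *)
Section G.
Variable R : realType.

Definition dot2 (a b : R * R) : R := a.1 * b.1 + a.2 * b.2.
Definition nrm2 (a : R * R) : R := a.1 ^+ 2 + a.2 ^+ 2.

Definition kfac (eps : R) (k : R * R) : R :=
  (sin (eps * k.1 / 2)) ^+ 2 * (sin (eps * k.2 / 2)) ^+ 2 /
  (eps ^+ 4 * k.1 ^+ 2 * k.2 ^+ 2).

Definition Dbar (m eps : R) (y k : R * R) : R :=
  nrm2 y + 4 * eps ^- 2 * (sin (eps * k.1 / 2)) ^+ 2
         + 4 * eps ^- 2 * (sin (eps * k.2 / 2)) ^+ 2 + m ^+ 2.

Definition Dtil (m : R) (y k : R * R) : R := nrm2 y + nrm2 k + m ^+ 2.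

(* Complex-valued integral (2pi)^-4 \int kfac * e^{-i(x.y + k.z)} / D^2,
   returned as (real part, imaginary part); e^{-i t} = cos t - i sin t. *)
Definition Gint (eps : R) (D : R * R -> R * R -> R) (x z : R * R) : R * R :=
  let c := ((2 * pi) ^+ 4)^-1 in
  (c * Rintegral (leb4 R) setT (fun p => kfac eps p.2 *
        cos (dot2 x p.1 + dot2 p.2 z) / (D p.1 p.2) ^+ 2),
   c * Rintegral (leb4 R) setT (fun p => - (kfac eps p.2 *
        sin (dot2 x p.1 + dot2 p.2 z) / (D p.1 p.2) ^+ 2))).

Definition Gbar (m eps : R) (x z : R * R) : R * R := Gint eps (Dbar m eps) x z.
Definition Gtil (m eps : R) (x z : R * R) : R * R := Gint eps (Dtil m) x z.

Definition cmod (w : R * R) : R := Num.sqrt (w.1 ^+ 2 + w.2 ^+ 2).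

End G.

(* Main.v *)
Require Import Defs.
From HB Require Import structures.
From mathcomp Require Import all_boot all_order all_algebra.
From mathcomp Require Import all_classical all_reals all_analysis.
From mathcomp Require Import ring lra unstable measurable_realfun.
Import Order.TTheory GRing.Theory Num.Theory.
Local Open Scope ring_scope.

Module Helpers.
Import numFieldNormedType.Exports.
Local Open Scope classical_set_scope.
Local Open Scope ring_scope.

Section Trig.
Context {R : realType}.

Lemma mono0 (f df : R -> R) : (forall x : R, is_derive x (1 : R) f (df x)) ->
  (forall x, 0 <= x -> 0 <= df x) -> forall x, 0 <= x -> f 0 <= f x.
Proof.
move=> fd dfp x; rewrite le_eqVlt => /predU1P[<-//|x0].
have h1 : forall y, y \in `]0, x[ -> is_derive y 1 f (df y) by move=> y _; exact: fd.
have h2 : {within `[0, x], continuous f}.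
  by apply: derivable_within_continuous => y _; case: (fd y).
have [c] := MVT x0 h1 h2.
rewrite in_itv /= => /andP[c0 _] H.
by rewrite -subr_ge0 H mulr_ge0 // ?dfp ?subr0 ?ltW.
Qed.

Lemma sin_le_x (x : R) : 0 <= x -> sin x <= x.
Proof.
move=> x0.
have d : forall y : R, is_derive y (1:R) (fun x => x - sin x) (1 - cos y).
  move=> y; exact: is_deriveB.
have p : forall y : R, 0 <= y -> 0 <= 1 - cos y by move=> y _; rewrite subr_ge0 cos_le1.
have := @mono0 _ _ d p x x0.
by rewrite sin0 subr0 subr_ge0.
Qed.

Lemma sin_ge_negx (x : R) : 0 <= x -> - x <= sin x.
Proof.
move=> x0.
have d : forall y : R, is_derive y (1:R) (fun x => x + sin x) (1 + cos y).
  move=> y; exact: is_deriveD.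
have p : forall y : R, 0 <= y -> 0 <= 1 + cos y.
  by move=> y _; rewrite -lerBlDl sub0r cos_geN1.
have := @mono0 _ _ d p x x0.
by rewrite sin0 addr0 -lerBlDl sub0r.
Qed.

Lemma cos_ge (x : R) : 0 <= x -> 1 - x ^+ 2 / 2 <= cos x.
Proof.
move=> x0.
have d : forall y : R, is_derive y (1:R) (fun x => cos x - 1 + x ^+ 2 / 2) (- sin y + y).
  move=> y.
  have h1 := is_deriveB (is_derive_cos y) (is_derive_cst (1:R) y 1).
  have h2 := is_deriveX 2 (is_derive_id y (1:R)).
  have h3 := is_deriveM h2 (is_derive_cst (2^-1:R) y 1).
  have h4 := is_deriveD h1 h3.
  have -> : (fun x : R => cos x - 1 + x ^+ 2 / 2) = (cos - cst 1 + id ^+ 2 * cst 2^-1).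
    by apply/funext => z.
  apply: is_derive_eq h4 _.
  rewrite /= !scaler0 add0r subr0 expr1 /GRing.scale /=; lra.
have p : forall y : R, 0 <= y -> 0 <= - sin y + y.
  by move=> y y0; rewrite addrC subr_ge0 sin_le_x.
have := @mono0 _ _ d p x x0.
rewrite cos0 subrr expr0n /= mul0r addr0 => H; lra.
Qed.

Lemma sin_ge (x : R) : 0 <= x -> x - x ^+ 3 / 6 <= sin x.
Proof.
move=> x0.
have d : forall y : R, is_derive y (1:R) (fun x => sin x - x + x ^+ 3 / 6) (cos y - 1 + y ^+ 2 / 2).
  move=> y.
  have h1 := is_deriveB (is_derive_sin y) (is_derive_id y (1:R)).
  have h2 := is_deriveX 3 (is_derive_id y (1:R)).
  have h3 := is_deriveM h2 (is_derive_cst (6^-1:R) y 1).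
  have h4 := is_deriveD h1 h3.
  have -> : (fun x : R => sin x - x + x ^+ 3 / 6) = (sin - id + id ^+ 3 * cst 6^-1).
    by apply/funext => z.
  apply: is_derive_eq h4 _.
  rewrite /= !scaler0 add0r /GRing.scale /=; lra.
have p : forall y : R, 0 <= y -> 0 <= cos y - 1 + y ^+ 2 / 2.
  by move=> y y0; have := @cos_ge y y0; lra.
have := @mono0 _ _ d p x x0.
rewrite sin0 subrr expr0n /= mul0r addr0 => H; lra.
Qed.

Lemma sin_sqr_le_pos (x : R) : 0 <= x -> sin x ^+ 2 <= x ^+ 2.
Proof.
move=> x0; have h1 := @sin_le_x x x0; have h2 := @sin_ge_negx x x0.
rewrite -subr_ge0 -[_ - _]mulr1 (_ : x ^+ 2 - sin x ^+ 2 = (x - sin x) * (x + sin x)); last by ring.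
by rewrite mulr1 mulr_ge0 //; lra.
Qed.

Lemma sin_sqr_le (x : R) : sin x ^+ 2 <= x ^+ 2.
Proof.
have [x0|x0] := leP 0 x; first exact: sin_sqr_le_pos.
by rewrite -sqrrN -sinN -(sqrrN x) sin_sqr_le_pos // oppr_ge0 ltW.
Qed.

Lemma sin_sqr_ge_pos (x : R) : 0 <= x -> x ^+ 2 - x ^+ 4 / 3 <= sin x ^+ 2.
Proof.
move=> x0; have h := @sin_ge x x0.
have [hx|hx] := leP (x ^+ 2) 6.
  have a0 : 0 <= x - x ^+ 3 / 6.
    rewrite (_ : x - x ^+ 3 / 6 = x * (6 - x ^+ 2) / 6); last by field.
    by rewrite mulr_ge0 // mulr_ge0 // subr_ge0.
  have : (x - x ^+ 3 / 6) ^+ 2 <= sin x ^+ 2 by nra.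
  have : 0 <= x ^+ 6 / 36 by rewrite mulr_ge0 // exprn_even_ge0.
  move=> h6 h7; apply: le_trans h7.
  rewrite (_ : (x - x ^+ 3 / 6) ^+ 2 = x ^+ 2 - x ^+ 4 / 3 + x ^+ 6 / 36); last by field.
  by rewrite lerDl.
apply: le_trans (sqr_ge0 _).
rewrite (_ : x ^+ 4 = x ^+ 2 * x ^+ 2); last by rewrite -exprD.
move: hx; set t := x ^+ 2 => hx; nra.
Qed.

Lemma sin_sqr_ge (x : R) : x ^+ 2 - x ^+ 4 / 3 <= sin x ^+ 2.
Proof.
have [x0|x0] := leP 0 x; first exact: sin_sqr_ge_pos.
have e : (- x) ^+ 4 = x ^+ 4 by rewrite -[4%N]/(2 * 2)%N !exprM sqrrN.
have := @sin_sqr_ge_pos (- x); rewrite oppr_ge0 sinN !sqrrN e.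
by apply; rewrite ltW.
Qed.

End Trig.

Section Lor.
Context {R : realType}.
Notation mu := (@lebesgue_measure R).

Definition lor (c x : R) : R := (1 + (x * c) ^+ 2)^-1.

Lemma lor_ge0 c x : 0 <= lor c x.
Proof. by rewrite /lor invr_ge0 addr_ge0 // sqr_ge0. Qed.

Lemma lor_gt0 c x : 0 < lor c x.
Proof. by rewrite /lor invr_gt0 ltr_pwDl // sqr_ge0. Qed.

Lemma continuous_lor c : continuous (lor c).
Proof.
have -> : lor c = (oneDsqr\^-1) \o (fun x => x * c) by [].
move=> x; apply: continuous_comp; last exact: continuous_oneDsqrV.
by apply: continuousM => //; exact: cvg_cst.
Qed.

Lemma measurable_lor c : measurable_fun setT (lor c).
Proof. apply: continuous_measurable_fun; exact: continuous_lor. Qed.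

Lemma is_derive_atan (x : R) : is_derive x 1 (@atan R) (1 + x ^+ 2)^-1.
Proof.
apply: DeriveDef; first exact: derivable_atan.
by rewrite -derive1E derive1_atan.
Qed.

Lemma int_lor c : 0 < c -> (\int[mu]_x (lor c x)%:E = (pi / c)%:E)%E.
Proof.
move=> c0.
have ev : lor c =1 lor c \o -%R by move=> x; rewrite /lor /= mulNr sqrrN.
rewrite (ge0_symfun_integralT (@lor_ge0 c) (@continuous_lor c) ev).
pose F := fun x : R => atan (x * c) / c.
have dF : forall x : R, is_derive x 1 F (lor c x).
  move=> x.
  have h1 : is_derive x (1:R) (fun x => x * c) c.
    have h0 := is_deriveM (is_derive_id x (1:R)) (is_derive_cst c x 1).
    have -> : (fun x => x * c) = (id * cst c) by apply/funext.
    apply: is_derive_eq h0 _.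
    by rewrite /= scaler0 add0r /GRing.scale /= mulr1.
  have h2 := @is_derive1_comp _ atan (fun x => x * c) x _ _ (is_derive_atan (x * c)) h1.
  have h3 := is_deriveM h2 (is_derive_cst (c^-1) x 1).
  apply: is_derive_eq h3 _.
  by rewrite /= scaler0 add0r /GRing.scale /= mulrC -mulrA mulfV ?gt_eqF // mulr1.
rewrite (_ : [set x : R | 0 <= x] = `[0, +oo[%classic); last by rewrite set_itvcy.

have f0 : forall x, 0 <= x -> 0 <= lor c x by move=> x _; exact: lor_ge0.
have cf : {within `[0, +oo[, continuous (lor c)} by exact/continuous_subspaceT/continuous_lor.
have Fl : F x @[x --> +oo] --> pi / 2 / c.
  rewrite /F; apply: cvgM; last exact: cvg_cst.
  apply: (@cvg_comp _ _ _ (fun x => x * c) atan _ (pinfty_nbhs R)); last exact: cvgy_atan.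
  exact: (gt0_cvgMly c0 cvg_id).
have dFd : forall x, 0 < x -> derivable F x 1 by move=> x _; case: (dF x).
have cF : forall x, {for x, continuous F}.
  move=> x; apply: differentiable_continuous; apply/derivable1_diffP; case: (dF x) => //.
have Fa : F x @[x --> 0^'+] --> F 0 by apply: cvg_at_right_filter; exact: cF.
have dFE : {in `]0, +oo[, (F^`())%classic =1 lor c}.
  by move=> x _; rewrite derive1E; exact: derive_val.
rewrite (ge0_continuous_FTC2y f0 cf Fl dFd Fa dFE).
rewrite /F mul0r atan0 mul0r sube0 -EFinM; congr EFin.
by rewrite !mulrA (mulrC 2) mulfK // pnatr_eq0.
Qed.
End Lor.

Section Meas.
Context {R : realType}.

Lemma int_sep d1 d2 (T1 : measurableType d1) (T2 : measurableType d2)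
  (m1 : {sigma_finite_measure set T1 -> \bar R})
  (m2 : {sigma_finite_measure set T2 -> \bar R}) (f : T1 -> R) (g : T2 -> R) :
  measurable_fun setT f -> measurable_fun setT g ->
  (forall x, 0 <= f x) -> (forall y, 0 <= g y) ->
  (\int[m1 \x m2]_z (f z.1 * g z.2)%:E =
   \int[m1]_x (f x)%:E * \int[m2]_y (g y)%:E)%E.
Proof.
move=> mf mg f0 g0.
have mfg : measurable_fun setT (fun z : T1 * T2 => (f z.1 * g z.2)%:E).
  apply/measurable_EFinP; apply: measurable_funM.
    exact: measurableT_comp mf measurable_fst.
  exact: measurableT_comp mg measurable_snd.
rewrite fubini_tonelli1 //; last by move=> z; rewrite lee_fin mulr_ge0.
rewrite /fubini_F /=.
have mg' : measurable_fun setT (fun y => (g y)%:E) by exact/measurable_EFinP.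
have mf' : measurable_fun setT (fun y => (f y)%:E) by exact/measurable_EFinP.
transitivity (\int[m1]_x ((f x)%:E * \int[m2]_y (g y)%:E))%E.
  apply: eq_integral => x _.
  under eq_integral do rewrite EFinM.
  apply: ge0_integralZl_EFin => //.
    by move=> y _; rewrite lee_fin.
apply: ge0_integralZr => //.
  by move=> x _; rewrite lee_fin.
by apply: integral_ge0 => y _; rewrite lee_fin.
Qed.

Lemma int_sep4 (F G : (R * R) -> R) :
  measurable_fun setT F -> measurable_fun setT G ->
  (forall x, 0 <= F x) -> (forall y, 0 <= G y) ->
  (\int[leb4 R]_z (F z.1 * G z.2)%:E =
   \int[leb2 R]_x (F x)%:E * \int[leb2 R]_y (G y)%:E)%E.
Proof. move=> *; exact: int_sep. Qed.

End Meas.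

Section Meas.
Context {R : realType}.

Lemma measurable_inv : measurable_fun [set: R] (@GRing.inv R).
Proof.
have cl : closed [set (0:R)].
  exact: accessible_closed_set1 (hausdorff_accessible (@Rhausdorff R)) 0.
have -> : [set: R] = ~` [set 0] `|` [set 0] by rewrite setvU.
apply/measurable_funU => //.
- by apply: measurableC.
split; last exact: measurable_fun_set1.
apply: open_continuous_measurable_fun; first exact: closed_openC.
by move=> x; rewrite inE => /eqP x0; exact: inv_continuous.
Qed.

Section MT.
Context d (T : measurableType d).
Implicit Types f g : T -> R.
Lemma mD f g : measurable_fun setT f -> measurable_fun setT g -> measurable_fun setT (fun p => f p + g p).
Proof. exact: measurable_funD. Qed.
Lemma mM f g : measurable_fun setT f -> measurable_fun setT g -> measurable_fun setT (fun p => f p * g p).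
Proof. exact: measurable_funM. Qed.
Lemma mN f : measurable_fun setT f -> measurable_fun setT (fun p => - f p).
Proof. exact: measurable_funN. Qed.
Lemma mX f n : measurable_fun setT f -> measurable_fun setT (fun p => f p ^+ n).
Proof. exact: measurable_funX. Qed.
Lemma mV f : measurable_fun setT f -> measurable_fun setT (fun p => (f p)^-1).
Proof. move=> mf; exact: (measurableT_comp measurable_inv mf). Qed.
Lemma msin f : measurable_fun setT f -> measurable_fun setT (fun p => sin (f p)).
Proof. move=> mf; apply: (measurableT_comp _ mf); apply: continuous_measurable_fun; exact: continuous_sin. Qed.
Lemma mcos f : measurable_fun setT f -> measurable_fun setT (fun p => cos (f p)).
Proof. move=> mf; apply: (measurableT_comp _ mf); apply: continuous_measurable_fun; exact: continuous_cos. Qed.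
Lemma mcst (c : R) : measurable_fun setT (fun _ : T => c).
Proof. exact: measurable_cst. Qed.
End MT.

Section Proj.
Context d1 d2 (T1 : measurableType d1) (T2 : measurableType d2).
Lemma mfst1 : measurable_fun setT (fun p : T1 * T2 => p.1). Proof. exact: measurable_fst. Qed.
Lemma msnd1 : measurable_fun setT (fun p : T1 * T2 => p.2). Proof. exact: measurable_snd. Qed.
End Proj.

Lemma mp11 : measurable_fun setT (fun p : (R * R) * (R * R) => p.1.1).
Proof. exact: measurableT_comp measurable_fst measurable_fst. Qed.
Lemma mp12 : measurable_fun setT (fun p : (R * R) * (R * R) => p.1.2).
Proof. exact: measurableT_comp measurable_snd measurable_fst. Qed.
Lemma mp21 : measurable_fun setT (fun p : (R * R) * (R * R) => p.2.1).
Proof. exact: measurableT_comp measurable_fst measurable_snd. Qed.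
Lemma mp22 : measurable_fun setT (fun p : (R * R) * (R * R) => p.2.2).
Proof. exact: measurableT_comp measurable_snd measurable_snd. Qed.
Lemma mq1 : measurable_fun setT (fun p : R * R => p.1). Proof. exact: measurable_fst. Qed.
Lemma mq2 : measurable_fun setT (fun p : R * R => p.2). Proof. exact: measurable_snd. Qed.

End Meas.

Ltac mt := repeat first [ exact: mp11 | exact: mp12 | exact: mp21 | exact: mp22
  | exact: mq1 | exact: mq2 | exact: mcst
  | apply: mD | apply: mM | apply: mN | apply: mX | apply: mV | apply: msin | apply: mcos ].


Section PW.
Context {R : realType}.
Implicit Types e t m : R.

Definition q e t := sin (e * t / 2) ^+ 2 / (e ^+ 2 * t ^+ 2).
Definition s e t := 4 * e ^- 2 * sin (e * t / 2) ^+ 2.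
Definition dd e t := t ^+ 2 - s e t.

Lemma kfacE e (k : R * R) : kfac e k = q e k.1 * q e k.2.
Proof.
rewrite /kfac /q.
have -> : e ^+ 4 * k.1 ^+ 2 * k.2 ^+ 2 = (e ^+ 2 * k.1 ^+ 2) * (e ^+ 2 * k.2 ^+ 2) by ring.
rewrite invfM; ring.
Qed.

Lemma q_ge0 e t : 0 <= q e t.
Proof. by rewrite /q mulr_ge0 // ?sqr_ge0 // invr_ge0 mulr_ge0 // sqr_ge0. Qed.

Lemma sinsq_le1 x : sin x ^+ 2 <= 1 :> R.
Proof. by have := cos2Dsin2 x; have := sqr_ge0 (cos x); lra. Qed.

Lemma sinsq_ge0 x : 0 <= sin x ^+ 2 :> R.
Proof. exact: sqr_ge0. Qed.

Lemma q_le e t : 0 < e -> q e t <= 5 / 4 * lor e t.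
Proof.
move=> e0; have L0 := lor_gt0 e t.
have [->|t0] := eqVneq t 0.
  have z2 : (0:R) ^+ 2 = 0 by rewrite expr2 mulr0.
  by rewrite /q z2 !(mulr0, invr0) mulr_ge0 // lor_ge0.
set S := sin (e * t / 2) ^+ 2.
set D := e ^+ 2 * t ^+ 2.
have t2 : 0 < t ^+ 2 by rewrite lt_def sqrf_eq0 t0 sqr_ge0.
have D0 : 0 < D by rewrite mulr_gt0 // exprn_gt0.
have SD : S <= D / 4.
  have -> : D / 4 = (e * t / 2) ^+ 2 by rewrite /D; field.
  exact: sin_sqr_le.
have S1 : S <= 1 by exact: sinsq_le1.
have S0 : 0 <= S by exact: sinsq_ge0.
have LE : lor e t * (1 + D) = 1.
  by rewrite /lor /D exprMn mulrC [t ^+ 2 * _]mulrC mulfV // gt_eqF // ltr_pwDl // mulr_ge0 // sqr_ge0.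
rewrite /q -/S -/D.
have Q14 : S / D <= 1 / 4 by rewrite ler_pdivrMr // mulrC; lra.
have QE : S / D * D = S by rewrite mulfVK // gt_eqF.
have H : S / D * (1 + D) <= 5 / 4.
  by rewrite mulrDr mulr1 QE; lra.
have -> : S / D = S / D * (1 + D) * lor e t by rewrite -mulrA [(1 + D) * _]mulrC LE mulr1.
by apply: ler_wpM2r => //; exact: ltW.
Qed.

Lemma s_ge0 e t : 0 <= s e t.
Proof.
apply: mulr_ge0; last exact: sqr_ge0.
by apply: mulr_ge0; [exact: ler0n | rewrite invr_ge0; exact: exprn_even_ge0].
Qed.

Lemma s_le e t : 0 < e -> s e t <= t ^+ 2.
Proof.
move=> e0.
have -> : t ^+ 2 = 4 * e ^- 2 * (e * t / 2) ^+ 2 by field; rewrite gt_eqF.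
rewrite /s; apply: ler_wpM2l; last exact: sin_sqr_le.
by rewrite mulr_ge0 // invr_ge0 exprn_even_ge0.
Qed.

Lemma dd_ge0 e t : 0 < e -> 0 <= dd e t.
Proof. by move=> e0; rewrite /dd subr_ge0 s_le. Qed.

Lemma dd_le1 e t : 0 < e -> dd e t <= e ^+ 2 * t ^+ 4 / 12.
Proof.
move=> e0; rewrite /dd.
have h := sin_sqr_ge (e * t / 2).
have h2 : 4 * e ^- 2 * ((e * t / 2) ^+ 2 - (e * t / 2) ^+ 4 / 3) <= s e t.
  rewrite /s; apply: ler_wpM2l => //.
  by apply: mulr_ge0; [exact: ler0n | rewrite invr_ge0; exact: exprn_even_ge0].
rewrite (_ : 4 * e ^- 2 * ((e * t / 2) ^+ 2 - (e * t / 2) ^+ 4 / 3) = t ^+ 2 - e ^+ 2 * t ^+ 4 / 12) in h2; last first.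
  by field; rewrite gt_eqF.
lra.
Qed.

Lemma lorE e t : lor e t * (1 + e ^+ 2 * t ^+ 2) = 1.
Proof.
rewrite /lor exprMn mulrC [t ^+ 2 * _]mulrC mulfV // gt_eqF // ltr_pwDl //.
by rewrite mulr_ge0 // sqr_ge0.
Qed.

Lemma dd_le e t : 0 < e -> dd e t <= 2 * e ^+ 2 * t ^+ 4 * lor e t.
Proof.
move=> e0; have L0 := lor_gt0 e t.
have d0 := dd_ge0 e t e0; have d1 := dd_le1 e t e0.
have d2 : dd e t <= t ^+ 2 by rewrite /dd lerBlDr lerDl s_ge0.
have E2 : 0 <= e ^+ 2 * t ^+ 2 by rewrite mulr_ge0 // exprn_even_ge0.
have H : dd e t * (1 + e ^+ 2 * t ^+ 2) <= 2 * e ^+ 2 * t ^+ 4.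
  rewrite mulrDr mulr1.
  have : dd e t * (e ^+ 2 * t ^+ 2) <= t ^+ 2 * (e ^+ 2 * t ^+ 2) by exact: ler_wpM2r.
  have -> : t ^+ 2 * (e ^+ 2 * t ^+ 2) = e ^+ 2 * t ^+ 4 by ring.
  lra.
have -> : dd e t = dd e t * (1 + e ^+ 2 * t ^+ 2) * lor e t.
  by rewrite -mulrA [(1 + _) * _]mulrC lorE mulr1.
by apply: ler_wpM2r => //; exact: ltW.
Qed.

Lemma key1 e m t1 t2 : 0 < e -> 0 < m ->
  q e t1 * dd e t1 / ((t1 ^+ 2 + t2 ^+ 2 + m ^+ 2) * (s e t1 + s e t2 + m ^+ 2))
  <= e ^+ 2 / 2 * lor e t1.
Proof.
move=> e0 m0.
have L0 := lor_gt0 e t1.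
have m2 : 0 < m ^+ 2 by exact: exprn_gt0.
have [->|t0] := eqVneq t1 0.
  have -> : dd e 0 = 0.
    by rewrite /dd /s !mulr0 mul0r sin0 expr2 !mulr0 subr0.
  rewrite mulr0 mul0r; apply: mulr_ge0; last exact: lor_ge0.
  by apply: mulr_ge0; [exact: exprn_even_ge0 | rewrite invr_ge0 ler0n].
have t2p : 0 < t1 ^+ 2 by rewrite lt_def sqrf_eq0 t0 sqr_ge0.
have ct0 : 0 < t1 ^+ 2 + t2 ^+ 2 + m ^+ 2.
  by rewrite ltr_wpDl // addr_ge0 // exprn_even_ge0.
have cb0 : 0 < s e t1 + s e t2 + m ^+ 2.
  by rewrite ltr_wpDl // addr_ge0 // s_ge0.
have ctge : t1 ^+ 2 <= t1 ^+ 2 + t2 ^+ 2 + m ^+ 2.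
  by rewrite -addrA lerDl addr_ge0 // ?exprn_even_ge0 // ltW.
have cbge : s e t1 <= s e t1 + s e t2 + m ^+ 2.
  by rewrite -addrA lerDl addr_ge0 // ?s_ge0 // ltW.
rewrite ler_pdivrMr ?mulr_gt0 //.
have h1 : q e t1 * dd e t1 <= q e t1 * (2 * e ^+ 2 * t1 ^+ 4 * lor e t1).
  by apply: ler_wpM2l; [exact: q_ge0 | exact: dd_le].
have h2 : q e t1 * (2 * e ^+ 2 * t1 ^+ 4 * lor e t1) = e ^+ 2 / 2 * lor e t1 * (t1 ^+ 2 * s e t1).
  by rewrite /q /s; field; rewrite gt_eqF // t0.
have h3 : t1 ^+ 2 * s e t1 <= (t1 ^+ 2 + t2 ^+ 2 + m ^+ 2) * (s e t1 + s e t2 + m ^+ 2).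
  by apply: ler_pM => //; [exact: ltW | exact: s_ge0].
apply: le_trans h1 _; rewrite h2; apply: ler_wpM2l => //.
apply: mulr_ge0; last exact: lor_ge0.
by apply: mulr_ge0; [exact: exprn_even_ge0 | rewrite invr_ge0 ler0n].
Qed.

Lemma kbound e m (k : R * R) : 0 < e -> 0 < m ->
  q e k.1 * q e k.2 * (2 * (dd e k.1 + dd e k.2) / (k.1 ^+ 2 + k.2 ^+ 2 + m ^+ 2)) *
  (pi ^+ 2 / (2 * (s e k.1 + s e k.2 + m ^+ 2)))
  <= pi ^+ 2 * (5 / 4 * e ^+ 2) * (lor e k.1 * lor e k.2).
Proof.
move=> e0 m0; case: k => t1 t2 /=.
have m2 : 0 < m ^+ 2 by exact: exprn_gt0.
set ct := t1 ^+ 2 + t2 ^+ 2 + m ^+ 2.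
set cb := s e t1 + s e t2 + m ^+ 2.
have ct0 : 0 < ct by rewrite /ct ltr_wpDl // addr_ge0 // exprn_even_ge0.
have cb0 : 0 < cb by rewrite /cb ltr_wpDl // addr_ge0 // s_ge0.
have K1 := key1 e m t1 t2 e0 m0.
have K2 := key1 e m t2 t1 e0 m0.
rewrite -/ct -/cb in K1.
rewrite (_ : (t2 ^+ 2 + t1 ^+ 2 + m ^+ 2) * (s e t2 + s e t1 + m ^+ 2) = ct * cb) in K2; last first.
  by rewrite /ct /cb; ring.
have A0 : 0 <= q e t1 * dd e t1 / (ct * cb).
  apply: mulr_ge0; first by apply: mulr_ge0; [exact: q_ge0 | exact: dd_ge0].
  by rewrite invr_ge0; apply: mulr_ge0; exact: ltW.
have B0 : 0 <= q e t2 * dd e t2 / (ct * cb).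
  apply: mulr_ge0; first by apply: mulr_ge0; [exact: q_ge0 | exact: dd_ge0].
  by rewrite invr_ge0; apply: mulr_ge0; exact: ltW.
have -> : q e t1 * q e t2 * (2 * (dd e t1 + dd e t2) / ct) * (pi ^+ 2 / (2 * cb)) =
  pi ^+ 2 * (q e t2 * (q e t1 * dd e t1 / (ct * cb)) + q e t1 * (q e t2 * dd e t2 / (ct * cb))).
  by field; rewrite !gt_eqF.
rewrite -[pi ^+ 2 * _ * _]mulrA; apply: ler_wpM2l; first exact: exprn_even_ge0.
have H1 : q e t2 * (q e t1 * dd e t1 / (ct * cb)) <= (5 / 4 * lor e t2) * (e ^+ 2 / 2 * lor e t1).
  by apply: ler_pM => //; [exact: q_ge0 | exact: q_le].
have H2 : q e t1 * (q e t2 * dd e t2 / (ct * cb)) <= (5 / 4 * lor e t1) * (e ^+ 2 / 2 * lor e t2).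
  by apply: ler_pM => //; [exact: q_ge0 | exact: q_le].
have -> : 5 / 4 * e ^+ 2 * (lor e t1 * lor e t2) =
  (5 / 4 * lor e t2) * (e ^+ 2 / 2 * lor e t1) + (5 / 4 * lor e t1) * (e ^+ 2 / 2 * lor e t2).
  by field.
exact: lerD.
Qed.

Lemma absdiff (K c B T ct : R) : 0 <= K -> `|c| <= 1 -> 0 < B -> B <= T -> 0 < ct -> ct <= T ->
  `|K * c / B ^+ 2 - K * c / T ^+ 2| <= K * (2 * (T - B) / ct) * (B ^+ 2)^-1.
Proof.
move=> K0 c1 B0 BT ct0 ctT.
have T0 : 0 < T by exact: lt_le_trans BT.
have B2 : 0 < B ^+ 2 by exact: exprn_gt0.
have T2 : 0 < T ^+ 2 by exact: exprn_gt0.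
have -> : K * c / B ^+ 2 - K * c / T ^+ 2 = K * c * ((B ^+ 2)^-1 - (T ^+ 2)^-1) by ring.
have D0 : 0 <= (B ^+ 2)^-1 - (T ^+ 2)^-1.
  rewrite subr_ge0 lef_pV2 ?posrE //.
  by rewrite ler_pXn2r // ?nnegrE ltW.
rewrite normrM (ger0_norm D0) normrM (ger0_norm K0).
have E1 : (B ^+ 2)^-1 - (T ^+ 2)^-1 = (T - B) * ((T + B) / T ^+ 2) * (B ^+ 2)^-1.
  by field; rewrite !gt_eqF.
have E2 : (T + B) / T ^+ 2 <= 2 / ct.
  rewrite ler_pdivrMr // mulrAC ler_pdivlMr //.
  have : (T + B) * ct <= (2 * T) * ct by apply: ler_wpM2r; [exact: ltW | lra].
  have : 2 * T * ct <= 2 * T * T.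
    by apply: ler_wpM2l => //; rewrite mulr_ge0 // ltW.
  by rewrite expr2; lra.
have TB : 0 <= T - B by rewrite subr_ge0.
have H : (B ^+ 2)^-1 - (T ^+ 2)^-1 <= 2 * (T - B) / ct * (B ^+ 2)^-1.
  rewrite E1; apply: ler_wpM2r; first by rewrite invr_ge0 ltW.
  have -> : 2 * (T - B) / ct = (T - B) * (2 / ct) by ring.
  by apply: ler_wpM2l.
have : `|c| * ((B ^+ 2)^-1 - (T ^+ 2)^-1) <= (B ^+ 2)^-1 - (T ^+ 2)^-1.
  by rewrite -[X in _ <= X]mul1r; apply: ler_wpM2r.
move=> H3; have H4 := le_trans H3 H.
have := ler_wpM2l K0 H4; by rewrite !mulrA.
Qed.

End PW.

Section Y.
Context {R : realType}.
Notation mu := (@lebesgue_measure R).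

Definition hh (c t : R) : R := 2^-1 * (c / 2)^-1 * lor ((Num.sqrt (c / 2))^-1) t.

Lemma hhE c t : 0 < c -> hh c t = 2^-1 * (t ^+ 2 + c / 2)^-1.
Proof.
move=> c0; have a0 : 0 < c / 2 by rewrite divr_gt0.
rewrite /hh /lor -mulrA; congr (_ * _).
rewrite exprMn exprVn sqr_sqrtr ?ltW // -invfM; congr (_^-1).
by field; rewrite gt_eqF.
Qed.

Lemma hh_ge0 c t : 0 < c -> 0 <= hh c t.
Proof.
move=> c0; rewrite hhE //; apply: mulr_ge0; first by rewrite invr_ge0.
by rewrite invr_ge0 addr_ge0 ?sqr_ge0 // ltW // divr_gt0.
Qed.

Lemma measurable_hh c : measurable_fun setT (hh c).
Proof. by apply: measurable_funM => //; exact: measurable_lor. Qed.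

Lemma int_hh c : 0 < c ->
  (\int[mu]_t (hh c t)%:E = (2^-1 * (c / 2)^-1 * (pi * Num.sqrt (c / 2)))%:E)%E.
Proof.
move=> c0; have a0 : 0 < c / 2 by rewrite divr_gt0.
rewrite /hh; under eq_integral do rewrite EFinM.
rewrite ge0_integralZl_EFin //; last 3 first.
- by move=> x _; rewrite lee_fin lor_ge0.
- by apply/measurable_EFinP; exact: measurable_lor.
- by rewrite mulr_ge0 // invr_ge0 ltW.
rewrite int_lor ?invr_gt0 ?sqrtr_gt0 // invrK -EFinM; done.
Qed.

Lemma hh_pw c (y : R * R) : 0 < c -> ((nrm2 y + c) ^+ 2)^-1 <= hh c y.1 * hh c y.2.
Proof.
move=> c0; rewrite !hhE //.
set U := y.1 ^+ 2 + c / 2; set V := y.2 ^+ 2 + c / 2.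
have U0 : 0 < U by rewrite /U ltr_wpDl ?sqr_ge0 // divr_gt0.
have V0 : 0 < V by rewrite /V ltr_wpDl ?sqr_ge0 // divr_gt0.
have -> : nrm2 y + c = U + V by rewrite /nrm2 /U /V; field.
have -> : 2^-1 * U^-1 * (2^-1 * V^-1) = (4 * U * V)^-1 by field; rewrite !gt_eqF.
have P1 : 0 < (U + V) ^+ 2 by rewrite exprn_gt0 // addr_gt0.
have P2 : 0 < 4 * U * V by rewrite !mulr_gt0 // ltr0n.
rewrite lef_pV2 ?posrE //.
have := sqr_ge0 (U - V); lra.
Qed.

Lemma intY c : 0 < c ->
  (\int[leb2 R]_y (((nrm2 y + c) ^+ 2)^-1)%:E <= (pi ^+ 2 / (2 * c))%:E)%E.
Proof.
move=> c0; have a0 : 0 < c / 2 by rewrite divr_gt0.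
apply: (@le_trans _ _ (\int[leb2 R]_y (hh c y.1 * hh c y.2)%:E)%E).
  apply: ge0_le_integral => //.
  - by move=> y _; rewrite lee_fin invr_ge0 sqr_ge0.
  - apply/measurable_EFinP; rewrite /nrm2; mt.
  - apply/measurable_EFinP; apply: measurable_funM.
      exact: measurableT_comp (measurable_hh c) measurable_fst.
    exact: measurableT_comp (measurable_hh c) measurable_snd.
  - by move=> y _; rewrite lee_fin hh_pw.
rewrite /leb2 int_sep; last 4 first.
- exact: measurable_hh.
- exact: measurable_hh.
- by move=> x; exact: hh_ge0.
- by move=> x; exact: hh_ge0.
rewrite int_hh // -EFinM lee_fin.
have -> : (2^-1 / (c/2) * (pi * Num.sqrt (c/2))) * (2^-1 / (c/2) * (pi * Num.sqrt (c/2))) = pi ^+ 2 / (2 * c).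
  rewrite -expr2 !exprMn sqr_sqrtr ?ltW //.
  by field; rewrite gt_eqF.
by [].
Qed.

End Y.

Section Main.
Context {R : realType}.
Notation mu := (@lebesgue_measure R).

Lemma int_klor (k c : R) : 0 <= k -> 0 < c ->
  (\int[mu]_t (k * lor c t)%:E = (k * (pi / c))%:E)%E.
Proof.
move=> k0 c0; under eq_integral do rewrite EFinM.
rewrite ge0_integralZl_EFin //; last 2 first.
- by move=> x _; rewrite lee_fin lor_ge0.
- by apply/measurable_EFinP; exact: measurable_lor.
by rewrite int_lor.
Qed.

Definition Psi (e m : R) (p : (R * R) * (R * R)) : R :=
  (hh (m ^+ 2) p.1.1 * hh (m ^+ 2) p.1.2) * ((5 / 4 * lor e p.2.1) * (5 / 4 * lor e p.2.2)).

Lemma Psi_ge0 e m p : 0 < m -> 0 <= Psi e m p.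
Proof.
move=> m0; have m2 : 0 < m ^+ 2 by exact: exprn_gt0.
apply: mulr_ge0; first by apply: mulr_ge0; exact: hh_ge0.
by apply: mulr_ge0; apply: mulr_ge0 => //; exact: lor_ge0.
Qed.

Lemma Psi_integrable e m : 0 < e -> 0 < m -> (leb4 R).-integrable setT (EFin \o Psi e m).
Proof.
move=> e0 m0; have m2 : 0 < m ^+ 2 by exact: exprn_gt0.
have mh := @measurable_hh R (m ^+ 2).
have ml := @measurable_lor R e.
apply/integrableP; split.
  apply/measurable_EFinP; rewrite /Psi; apply: measurable_funM; apply: measurable_funM.
  - exact: measurableT_comp mh mp11.
  - exact: measurableT_comp mh mp12.
  - by apply: measurable_funM => //; exact: measurableT_comp ml mp21.
  - by apply: measurable_funM => //; exact: measurableT_comp ml mp22.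
have -> : (\int[leb4 R]_x `|(EFin \o Psi e m) x|)%E = (\int[leb4 R]_x (Psi e m x)%:E)%E.
  by apply: eq_integral => p _; rewrite /comp abse_EFin ger0_norm // Psi_ge0.
rewrite /Psi (@int_sep4 _ (fun y => hh (m ^+ 2) y.1 * hh (m ^+ 2) y.2)
  (fun k => (5 / 4 * lor e k.1) * (5 / 4 * lor e k.2))); last 4 first.
- apply: measurable_funM.
  + exact: measurableT_comp mh measurable_fst.
  + exact: measurableT_comp mh measurable_snd.
- apply: measurable_funM.
  + by apply: measurable_funM => //; exact: measurableT_comp ml measurable_fst.
  + by apply: measurable_funM => //; exact: measurableT_comp ml measurable_snd.
- by move=> y; apply: mulr_ge0; exact: hh_ge0.
- by move=> y; apply: mulr_ge0; apply: mulr_ge0 => //; exact: lor_ge0.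
rewrite /leb2 (@int_sep _ _ _ _ _ mu mu (fun t => 5 / 4 * lor e t) (fun t => 5 / 4 * lor e t)) //; last 4 first.
- by apply: measurable_funM.
- by apply: measurable_funM.
- by move=> t; apply: mulr_ge0 => //; exact: lor_ge0.
- by move=> t; apply: mulr_ge0 => //; exact: lor_ge0.
rewrite (@int_sep _ _ _ _ _ mu mu (hh (m ^+ 2)) (hh (m ^+ 2))) //; last 2 first.
- by move=> t; exact: hh_ge0.
- by move=> t; exact: hh_ge0.
rewrite int_hh // !int_klor // -!EFinM; exact: ltry.
Qed.

Lemma integ_bound (H : (R * R) * (R * R) -> R) e m (kap : R) :
  0 < e -> 0 < m -> 0 <= kap -> measurable_fun setT H ->
  (forall p, `|H p| <= kap * (kfac e p.2 * ((nrm2 p.1 + m ^+ 2) ^+ 2)^-1)) ->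
  (leb4 R).-integrable setT (EFin \o H).
Proof.
move=> e0 m0 k0 mH Hb.
have m2 : 0 < m ^+ 2 by exact: exprn_gt0.
have mPsi : measurable_fun setT (Psi e m).
  have := Psi_integrable e m e0 m0 => /integrableP[mP _]; exact/measurable_EFinP.
have iPsi : (\int[leb4 R]_p (Psi e m p)%:E < +oo)%E.
  have := Psi_integrable e m e0 m0 => /integrableP[_ iP].
  move: iP; congr (_ < _)%E; apply: eq_integral => p _.
  by rewrite /comp abse_EFin ger0_norm // Psi_ge0.
apply/integrableP; split; first exact/measurable_EFinP.
apply: (@le_lt_trans _ _ (\int[leb4 R]_p (kap * Psi e m p)%:E)%E).
  apply: ge0_le_integral => //.
  - apply: measurableT_comp => //; exact/measurable_EFinP.
  - by apply/measurable_EFinP; apply: measurable_funM.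
  - move=> p _; rewrite /comp abse_EFin lee_fin.
    apply: le_trans (Hb p) _; apply: ler_wpM2l => //.
    rewrite /Psi mulrC; apply: ler_pM.
    + by rewrite invr_ge0 sqr_ge0.
    + by rewrite kfacE; apply: mulr_ge0; exact: q_ge0.
    + exact: hh_pw.
    + by rewrite kfacE; apply: ler_pM; try exact: q_ge0; exact: q_le.
under eq_integral do rewrite EFinM.
rewrite ge0_integralZl_EFin //; last 2 first.
- by move=> p _; rewrite lee_fin Psi_ge0.
- exact/measurable_EFinP.
by rewrite lte_mul_pinfty // ?lee_fin // integral_ge0 // => p _; rewrite lee_fin Psi_ge0.
Qed.

End Main.

Section Main2.
Context {R : realType}.
Notation mu := (@lebesgue_measure R).

Definition cbk (e m : R) (k : R * R) := s e k.1 + s e k.2 + m ^+ 2.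
Definition Pk (e m : R) (k : R * R) := q e k.1 * q e k.2 *
  (2 * (dd e k.1 + dd e k.2) / (k.1 ^+ 2 + k.2 ^+ 2 + m ^+ 2)).
Definition Phi (e m : R) (p : (R * R) * (R * R)) :=
  Pk e m p.2 * ((nrm2 p.1 + cbk e m p.2) ^+ 2)^-1.

Lemma cbk_gt0 e m k : 0 < m -> 0 < cbk e m k.
Proof. by move=> m0; rewrite /cbk ltr_wpDl ?exprn_gt0 // addr_ge0 // s_ge0. Qed.

Lemma ct_gt0 m (k : R * R) : 0 < m -> 0 < k.1 ^+ 2 + k.2 ^+ 2 + m ^+ 2.
Proof. by move=> m0; rewrite ltr_wpDl ?exprn_gt0 // addr_ge0 // sqr_ge0. Qed.

Lemma Pk_ge0 e m k : 0 < e -> 0 < m -> 0 <= Pk e m k.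
Proof.
move=> e0 m0; rewrite /Pk; apply: mulr_ge0; first by apply: mulr_ge0; exact: q_ge0.
apply: mulr_ge0; first by apply: mulr_ge0 => //; apply: addr_ge0; exact: dd_ge0.
by rewrite invr_ge0 ltW // ct_gt0.
Qed.

Lemma Phi_ge0 e m p : 0 < e -> 0 < m -> 0 <= Phi e m p.
Proof.
move=> e0 m0; rewrite /Phi; apply: mulr_ge0; first exact: Pk_ge0.
by rewrite invr_ge0 sqr_ge0.
Qed.

Lemma measurable_Phi e m : measurable_fun setT (Phi e m).
Proof. rewrite /Phi /Pk /cbk /q /dd /s /nrm2; mt. Qed.

Lemma int_Phi e m : 0 < e -> 0 < m ->
  (\int[leb4 R]_p (Phi e m p)%:E <= (5 / 4 * pi ^+ 4)%:E)%E.
Proof.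
move=> e0 m0.
have mf : measurable_fun setT (fun p => (Phi e m p)%:E).
  by apply/measurable_EFinP; exact: measurable_Phi.
have f0 : forall p, (0 <= (Phi e m p)%:E)%E by move=> p; rewrite lee_fin Phi_ge0.
rewrite /leb4 fubini_tonelli2; last 2 first.
- exact: mf.
- exact: f0.
have ml := @measurable_lor R e.
apply: (@le_trans _ _ (\int[leb2 R]_k ((pi ^+ 2 * (5 / 4 * e ^+ 2)) * (lor e k.1 * lor e k.2))%:E)%E).
  apply: ge0_le_integral => //.
  - by move=> k _; apply: integral_ge0 => y _; exact: f0.
  - exact: measurable_fun_fubini_tonelli_G.
  - apply/measurable_EFinP; apply: measurable_funM => //; apply: measurable_funM.
      exact: measurableT_comp ml measurable_fst.
    exact: measurableT_comp ml measurable_snd.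
  - move=> k _; rewrite /fubini_G /Phi /=.
    under eq_integral do rewrite EFinM.
    rewrite ge0_integralZl_EFin //; last 3 first.
    + by move=> y _; rewrite lee_fin invr_ge0 sqr_ge0.
    + by apply/measurable_EFinP; rewrite /nrm2; mt.
    + exact: Pk_ge0.
    have P0 : (0 <= (Pk e m k)%:E)%E by rewrite lee_fin Pk_ge0.
    apply: (@le_trans _ _ ((Pk e m k)%:E * (pi ^+ 2 / (2 * cbk e m k))%:E)%E).
      apply: lee_wpmul2l => //; exact: intY (cbk_gt0 e m k m0).
    by rewrite -EFinM lee_fin; exact: kbound.
under eq_integral do rewrite EFinM.
rewrite ge0_integralZl_EFin //; last 3 first.
- by move=> k _; rewrite lee_fin mulr_ge0 // lor_ge0.
- apply/measurable_EFinP; apply: measurable_funM.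
    exact: measurableT_comp ml measurable_fst.
  exact: measurableT_comp ml measurable_snd.
- by rewrite mulr_ge0 ?exprn_even_ge0 // mulr_ge0 // exprn_even_ge0.
rewrite /leb2 (@int_sep _ _ _ _ _ mu mu (lor e) (lor e)) //; last 2 first.
- exact: lor_ge0.
- exact: lor_ge0.
rewrite int_lor // -!EFinM lee_fin le_eqVlt; apply/orP; left; apply/eqP.
by field; rewrite gt_eqF.
Qed.

End Main2.

Section Final.
Context {R : realType}.

Lemma absb (K c B A : R) : 0 <= K -> `|c| <= 1 -> 0 < A -> A <= B ->
  `|K * c / B ^+ 2| <= K * (A ^+ 2)^-1.
Proof.
move=> K0 c1 A0 AB.
have B0 : 0 < B by exact: lt_le_trans AB.
rewrite !normrM (ger0_norm K0) normrV ?unitfE ?gt_eqF ?exprn_gt0 //.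
rewrite (ger0_norm (ltW (exprn_gt0 2 B0))) -mulrA; apply: ler_wpM2l => //.
have : (B ^+ 2)^-1 <= (A ^+ 2)^-1.
  rewrite lef_pV2 ?posrE ?exprn_gt0 //.
  by rewrite ler_pXn2r // ?nnegrE ltW.
have : `|c| * (B ^+ 2)^-1 <= (B ^+ 2)^-1.
  by rewrite -[X in _ <= X]mul1r; apply: ler_wpM2r => //; rewrite invr_ge0 ltW // exprn_gt0.
exact: le_trans.
Qed.

Variables (m e : R).
Hypotheses (m0 : 0 < m) (e0 : 0 < e).

Lemma DbarE (y k : R * R) : Dbar m e y k = nrm2 y + cbk e m k.
Proof. by rewrite /Dbar /cbk /s; ring. Qed.

Lemma DtilE (y k : R * R) : Dtil m y k = nrm2 y + (k.1 ^+ 2 + k.2 ^+ 2 + m ^+ 2).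
Proof. by rewrite /Dtil /nrm2; ring. Qed.

Lemma nrm2_ge0 (y : R * R) : 0 <= nrm2 y.
Proof. by rewrite /nrm2 addr_ge0 // sqr_ge0. Qed.

Lemma kfac_ge0 (k : R * R) : 0 <= kfac e k.
Proof. by rewrite kfacE mulr_ge0 // q_ge0. Qed.


Lemma cb_le_ct (k : R * R) : cbk e m k <= k.1 ^+ 2 + k.2 ^+ 2 + m ^+ 2.
Proof. by rewrite /cbk lerD2r lerD // s_le. Qed.

Lemma bnd_bar (cc : R) (y k : R * R) : `|cc| <= 1 ->
  `|kfac e k * cc / (Dbar m e y k) ^+ 2| <= 1 * (kfac e k * ((nrm2 y + m ^+ 2) ^+ 2)^-1).
Proof.
move=> c1; rewrite mul1r; apply: absb => //; first exact: kfac_ge0.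
  by rewrite ltr_wpDl ?nrm2_ge0 ?exprn_gt0.
by rewrite DbarE lerD2l /cbk lerDr addr_ge0 // s_ge0.
Qed.

Lemma bnd_til (cc : R) (y k : R * R) : `|cc| <= 1 ->
  `|kfac e k * cc / (Dtil m y k) ^+ 2| <= 1 * (kfac e k * ((nrm2 y + m ^+ 2) ^+ 2)^-1).
Proof.
move=> c1; rewrite mul1r; apply: absb => //; first exact: kfac_ge0.
  by rewrite ltr_wpDl ?nrm2_ge0 ?exprn_gt0.
by rewrite DtilE lerD2l lerDr addr_ge0 // sqr_ge0.
Qed.

Lemma pw_diff (cc : R) (p : (R * R) * (R * R)) : `|cc| <= 1 ->
  `|kfac e p.2 * cc / (Dbar m e p.1 p.2) ^+ 2 - kfac e p.2 * cc / (Dtil m p.1 p.2) ^+ 2|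
  <= Phi e m p.
Proof.
move=> c1; rewrite DbarE DtilE.
have ct0 := ct_gt0 m p.2 m0.
have B0 : 0 < nrm2 p.1 + cbk e m p.2 by rewrite ltr_wpDl ?nrm2_ge0 ?cbk_gt0.
have BT : nrm2 p.1 + cbk e m p.2 <= nrm2 p.1 + (p.2.1 ^+ 2 + p.2.2 ^+ 2 + m ^+ 2).
  by rewrite lerD2l cb_le_ct.
have ctT : p.2.1 ^+ 2 + p.2.2 ^+ 2 + m ^+ 2 <= nrm2 p.1 + (p.2.1 ^+ 2 + p.2.2 ^+ 2 + m ^+ 2).
  by rewrite lerDr nrm2_ge0.

apply: le_trans (absdiff _ _ _ _ _ (kfac_ge0 p.2) c1 B0 BT ct0 ctT) _.
suff -> : kfac e p.2 * (2 * (nrm2 p.1 + (p.2.1 ^+ 2 + p.2.2 ^+ 2 + m ^+ 2) - (nrm2 p.1 + cbk e m p.2))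
   / (p.2.1 ^+ 2 + p.2.2 ^+ 2 + m ^+ 2)) * ((nrm2 p.1 + cbk e m p.2) ^+ 2)^-1 = Phi e m p by [].
by rewrite /Phi /Pk kfacE /cbk /dd; ring.
Qed.

Lemma comp_bound (Fn Gn : (R * R) * (R * R) -> R) :
  measurable_fun setT Fn -> measurable_fun setT Gn ->
  (forall p, `|Fn p| <= 1 * (kfac e p.2 * ((nrm2 p.1 + m ^+ 2) ^+ 2)^-1)) ->
  (forall p, `|Gn p| <= 1 * (kfac e p.2 * ((nrm2 p.1 + m ^+ 2) ^+ 2)^-1)) ->
  (forall p, `|Fn p - Gn p| <= Phi e m p) ->
  `|Rintegral (leb4 R) setT Fn - Rintegral (leb4 R) setT Gn| <= 5 / 4 * pi ^+ 4.
Proof.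
move=> mF mG hF hG hFG.
have iF := integ_bound Fn e m 1 e0 m0 ler01 mF hF.
have iG := integ_bound Gn e m 1 e0 m0 ler01 mG hG.
have mFG : measurable_fun setT (fun p => Fn p - Gn p) by exact: measurable_funB.
have hFG2 : forall p, `|Fn p - Gn p| <= 2 * (kfac e p.2 * ((nrm2 p.1 + m ^+ 2) ^+ 2)^-1).
  move=> p; apply: le_trans (ler_normB _ _) _.
  have := hF p; have := hG p; rewrite !mul1r; lra.
have iFG := integ_bound (fun p => Fn p - Gn p) e m 2 e0 m0 (ler0n _ 2) mFG hFG2.
rewrite -(RintegralB measurableT iF iG).
apply: le_trans (le_normr_Rintegral measurableT iFG) _.
rewrite /Rintegral.
have mA : measurable_fun setT (fun p => (`|Fn p - Gn p|)%:E).
  by apply/measurable_EFinP; apply: measurableT_comp => //; exact: normr_measurable.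
have I0 : (0 <= \int[leb4 R]_p (`|Fn p - Gn p|)%:E)%E.
  by apply: integral_ge0 => p _; rewrite lee_fin.
have I1 : (\int[leb4 R]_p (`|Fn p - Gn p|)%:E <= (5 / 4 * pi ^+ 4)%:E)%E.
  apply: le_trans (int_Phi e m e0 m0).
  apply: ge0_le_integral => //.
  all: try (by move=> p _; rewrite lee_fin hFG).
  all: try (by move=> p _; rewrite lee_fin).
  all: try exact: mA.
  all: try (by apply/measurable_EFinP; exact: measurable_Phi).
have -> : 5 / 4 * pi ^+ 4 = fine ((5 / 4 * pi ^+ 4)%:E) by [].
apply: fine_le => //.
by rewrite ge0_fin_numE // (le_lt_trans I1) // ltry.
Qed.

End Final.

Lemma cmod_le {R : realType} (w : R * R) : cmod w <= `|w.1| + `|w.2|.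
Proof.
rewrite /cmod.
have h0 : 0 <= `|w.1| + `|w.2| by rewrite addr_ge0.
rewrite -[X in _ <= X](ger0_norm h0) -sqrtr_sqr ler_sqrt; last by rewrite sqr_ge0.
have a1 := normr_ge0 w.1; have a2 := normr_ge0 w.2.
have e1 : w.1 ^+ 2 = `|w.1| ^+ 2 by rewrite -normrX ger0_norm // sqr_ge0.
have e2 : w.2 ^+ 2 = `|w.2| ^+ 2 by rewrite -normrX ger0_norm // sqr_ge0.
rewrite e1 e2.
move: a1 a2; set a := `|w.1|; set b := `|w.2| => a1 a2; nra.
Qed.

End Helpers.
Import Helpers.

Theorem mainTheorem14 (R : realType) (m : R) (hm : 0 < m) :
  exists C2 : R, 0 < C2 /\
    forall (eps : R), 0 < eps -> eps <= 1 ->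
    forall x z : R * R,
      cmod (Gbar m eps x z - Gtil m eps x z) <= C2.
Proof.
pose c : R := ((2 * pi) ^+ 4)^-1.
have c0 : 0 < c by rewrite /c invr_gt0 exprn_gt0 // mulr_gt0 // pi_gt0.
exists (c * (5 / 4 * pi ^+ 4) + c * (5 / 4 * pi ^+ 4) + 1).
split.
  have h : 0 <= c * (5 / 4 * pi ^+ 4).
    by apply: mulr_ge0; [exact: ltW | apply: mulr_ge0 => //; exact: exprn_even_ge0].
  by rewrite ltr_wpDl // addr_ge0.
move=> eps e0 _ x z.
apply: le_trans (cmod_le _) _.
apply: le_trans (_ : _ <= c * (5 / 4 * pi ^+ 4) + c * (5 / 4 * pi ^+ 4)) _; last by rewrite lerDl.
rewrite /Gbar /Gtil /Gint /=.
have cc : (2 * pi) ^- 4 = c by [].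
rewrite cc -!mulrBr !normrM (ger0_norm (ltW c0)).
apply: lerD; apply: ler_wpM2l; try exact: ltW.
- apply: (@comp_bound R m eps hm e0).
  + rewrite /kfac /Dbar /dot2 /nrm2; mt.
  + rewrite /kfac /Dtil /dot2 /nrm2; mt.
  + by move=> p; apply: bnd_bar => //; exact: cos_max.
  + by move=> p; apply: bnd_til => //; exact: cos_max.
  + by move=> p; apply: pw_diff => //; exact: cos_max.
- apply: (@comp_bound R m eps hm e0).
  + rewrite /kfac /Dbar /dot2 /nrm2; mt.
  + rewrite /kfac /Dtil /dot2 /nrm2; mt.
  + by move=> p; rewrite normrN; apply: bnd_bar => //; exact: sin_max.
  + by move=> p; rewrite normrN; apply: bnd_til => //; exact: sin_max.
  + move=> p; rewrite (_ : forall a b : R, - a - - b = - (a - b)); last by move=> a b; ring.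
    by rewrite normrN; apply: pw_diff => //; exact: sin_max.
Qed.
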